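(* Let $p,q$ be primes with $p>2$, $q>p$, $q\ge 5$, $p\mid q-1$, $p\nmid q+1$, $p^2\nmid q-1$. Let $\lambda$ be a fixed generator of the unique subgroup of order $p$ of $(\mathbf Z/(q))^*$. Then a system of representatives of the conjugacy classes of subgroups of order $p$ of $\mathrm{GL}(2,q)$ is $$\left\langle \begin{pmatrix}1&0\\0&\lambda\end{pmatrix}\right\rangle,\ \left\langle \begin{pmatrix}\lambda&0\\0&\lambda\end{pmatrix}\right\rangle,\ \left\langle \begin{pmatrix}\lambda&0\\0&\lambda^{-1}\end{pmatrix}\right\rangle,\ \left\langle \begin{pmatrix}\lambda&0\\0&\lambda^{k}\end{pmatrix}\right\rangle,$$ where $k$ runs over a system of representatives of the elements of $(\mathbf Z/(p))^*\setminus\{1,-1\}$ under the equivalence relation $k\sim l$ if and only if $kl\equiv 1\pmod p$. In particular, the number of conjugacy classes of subgroups of order $p$ of $\mathrm{GL}(2,q)$ is $(p+3)/2$. *)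

(* Defs.v *)
From mathcomp Require Import all_boot all_order all_algebra all_fingroup.
Set Implicit Arguments. Unset Strict Implicit. Unset Printing Implicit Defensive.
Import GRing.Theory.

Local Open Scope group_scope.

(* The diagonal matrix diag(a, b) with a, b units of F_q, as an element of
   GL(2, q).  It is invertible (det = a b), so [insubd 1] returns it. *)
Definition diagGL (q : nat) (a b : {unit 'F_q}) : {'GL_2(q)} :=
  insubd (1 : {'GL_2(q)})
    (\matrix_(i < 2, j < 2) (if i == j then
        (if (i : nat) == 0%N then val a else val b) else 0%R))%R.

Definition subgroups_of_order (gT : finGroupType) (n : nat) : {set {set gT}} :=
  [set H : {set gT} | group_set H && (#|H| == n)].

Definition subgroup_classes_of_order (gT : finGroupType) (n : nat)
  : {set {set {set gT}}} :=
  [set H :^: [set: gT] | H in subgroups_of_order gT n].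

(* A list L of subsets is a system of representatives of the conjugacy
   classes of subgroups of order n: every member is a subgroup of order n,
   and every subgroup of order n is conjugate to exactly one entry of L
   (counted with position, so the entries are pairwise non-conjugate). *)
Definition conj_class_reps (gT : finGroupType) (n : nat) (L : seq {set gT}) : Prop :=
  (forall K, K \in L -> K \in subgroups_of_order gT n) /\
  (forall H, H \in subgroups_of_order gT n ->
     count (fun K => H \in K :^: [set: gT]) L = 1%N).

(* The equivalence relation on (Z/p)^* \ {1,-1}: k ~ l iff k = l or k l = 1 mod p
   (the reflexive closure of the relation stated in the paper, which is already
   symmetric). *)
Definition inv_rel (p : nat) (k l : 'I_p) : bool :=
  (k == l) || ((k * l) %% p == 1%N).

(* (Z/p)^* \ {1,-1}, i.e. the residues 2, ..., p-2. *)
Definition units_minus_pm1 (p : nat) : {set 'I_p} :=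
  [set k : 'I_p | (1 < k)%N && (k < p.-1)%N].

Definition inv_reps (p : nat) (S : {set 'I_p}) : Prop :=
  S \subset units_minus_pm1 p /\
  (forall k, k \in units_minus_pm1 p -> #|[set s in S | inv_rel s k]| = 1%N).

(* Main.v *)
Require Import Defs.
From mathcomp Require Import all_boot all_order all_algebra all_fingroup all_solvable all_field.
From mathcomp Require Import zify ring.
Set Implicit Arguments. Unset Strict Implicit. Unset Printing Implicit Defensive.
Import GRing.Theory.
Local Open Scope ring_scope.

Definition dmx (F : fieldType) (a b : F) : 'M[F]_2 :=
  (\matrix_(i < 2, j < 2) (if i == j then
        (if (i : nat) == 0%N then a else b) else 0%R))%R.

Definition dg (F : finFieldType) (a b : {unit F}) : {'GL_2[F]} :=
  insubd (1 : {'GL_2[F]})%g (dmx (val a) (val b)).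

Lemma dg_diagGL q (a b : {unit 'F_q}) : diagGL a b = dg a b.
Proof. reflexivity. Qed.

Lemma dmxE (F : fieldType) (a b : F) : dmx a b = diag_mx (\row_(j < 2) (if (j : nat) == 0%N then a else b))%R.
Proof.
apply/matrixP=> i j; rewrite !mxE; case: eqP => [->|]; first by rewrite mulr1n.
by rewrite mulr0n.
Qed.

Lemma dmx_det (F : fieldType) (a b : F) : \det (dmx a b) = (a * b)%R.
Proof. by rewrite dmxE det_diag !big_ord_recl big_ord0 !mxE /= mulr1. Qed.

Lemma dmx_tr (F : fieldType) (a b : F) : \tr (dmx a b) = (a + b)%R.
Proof. by rewrite /mxtrace !big_ord_recl big_ord0 !mxE /= addr0. Qed.

Lemma dmx_unit (F : finFieldType) (a b : {unit F}) : dmx (val a) (val b) \in unitmx.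
Proof. by rewrite unitmxE dmx_det unitrM; apply/andP; split; apply: valP. Qed.

Lemma dgE (F : finFieldType) (a b : {unit F}) : GLval (dg a b) = dmx (val a) (val b).
Proof. by rewrite /dg insubdK //; apply: dmx_unit. Qed.

Lemma dmx_mul (F : fieldType) (a b c d : F) : (dmx a b *m dmx c d = dmx (a * c) (b * d))%R.
Proof. by rewrite !dmxE mulmx_diag; congr diag_mx; apply/rowP => j; rewrite !mxE; case: ifP. Qed.

Lemma dg_mul (F : finFieldType) (a b c d : {unit F}) :
  (dg a b * dg c d)%g = dg (a * c)%g (b * d)%g.
Proof.
apply: val_inj; change (GLval (dg a b * dg c d)%g = GLval (dg (a * c)%g (b * d)%g)).
by rewrite GL_MxE !dgE dmx_mul !FinRing.val_unitM.
Qed.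

Lemma dg1 (F : finFieldType) : dg (1%g : {unit F}) 1%g = 1%g.
Proof. apply: val_inj; change (GLval (dg (1%g : {unit F}) 1%g) = GLval 1%g).
rewrite dgE GL_1E; apply/matrixP => i j; rewrite !mxE.
by case: (i == j) => //; case: ifP. Qed.

Lemma dg_exp (F : finFieldType) (a b : {unit F}) n :
  (dg a b ^+ n)%g = dg (a ^+ n)%g (b ^+ n)%g.
Proof. elim: n => [|n IH]; first by rewrite !expg0 dg1.
by rewrite !expgS IH dg_mul. Qed.

Lemma dg_inj (F : finFieldType) (a b c d : {unit F}) : dg a b = dg c d -> a = c /\ b = d.
Proof. move/(congr1 GLval); rewrite !dgE => /matrixP E.
have := E ord0 ord0; have := E 1 1; rewrite !mxE /= => h1 h2.
by split; apply: val_inj. Qed.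

Lemma dg_eq1 (F : finFieldType) (a b : {unit F}) : (dg a b == 1%g) = (a == 1%g) && (b == 1%g).
Proof. apply/eqP/andP => [|[/eqP -> /eqP ->]]; last exact: dg1.
by rewrite -dg1 => /dg_inj [-> ->]. Qed.

Definition wmx (F : fieldType) : 'M[F]_2 := \matrix_(i < 2, j < 2) (if i == j then 0 else 1).

Lemma wmx_unit (F : fieldType) : wmx F \in unitmx.
Proof.
rewrite unitmxE (expand_det_row _ ord0) !big_ord_recl big_ord0 /cofactor !mxE /=.
rewrite !det_mx11 !mxE /=. rewrite !mul0r !mul1r add0r addr0 expr1.
by rewrite mulr1 unitrN1.
Qed.

Definition wGL (F : finFieldType) : {'GL_2[F]} := insubd (1%g : {'GL_2[F]}) (wmx F).

Lemma wGLE (F : finFieldType) : GLval (wGL F) = wmx F.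
Proof. by rewrite /wGL insubdK //; apply: wmx_unit. Qed.

Lemma wmx_comm (F : fieldType) (a b : F) : wmx F *m dmx a b = dmx b a *m wmx F.
Proof.
apply/matrixP => i j; rewrite !mxE !big_ord_recl big_ord0 !mxE.
by case: i => [[|[|//]] Hi]; case: j => [[|[|//]] Hj]; rewrite /= ?big_ord0 ?mul0r ?mulr0 ?mul1r ?mulr1 ?addr0 ?add0r.
Qed.

Lemma dg_swap (F : finFieldType) (a b : {unit F}) : (dg a b ^ wGL F)%g = dg b a.
Proof.
suff E : (dg a b * wGL F = wGL F * dg b a)%g by rewrite conjgE E mulKg.
apply: val_inj; change (GLval (dg a b * wGL F)%g = GLval (wGL F * dg b a)%g).
by rewrite !GL_MxE !dgE wGLE wmx_comm.
Qed.

Lemma conj_tr_det (F : finFieldType) (x g : {'GL_2[F]}) :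
  \tr (GLval (x ^ g)%g) = \tr (GLval x) /\ \det (GLval (x ^ g)%g) = \det (GLval x).
Proof.
rewrite conjgE !GL_MxE GL_VxE; split.
  by rewrite mulmxA mxtrace_mulC mulmxA mulmxV ?mul1mx //; apply: GL_unitmx.
rewrite !det_mulmx det_inv mulrA mulrC mulrA mulrV ?mul1r //.
by rewrite -unitmxE; apply: GL_unitmx.
Qed.

Lemma dg_conj (F : finFieldType) (a b c d : {unit F}) (g : {'GL_2[F]}) :
  (dg a b ^ g)%g = dg c d -> (a = c /\ b = d) \/ (a = d /\ b = c).
Proof.
move=> E; have [Etr Edet] := conj_tr_det (dg a b) g.
rewrite E !dgE !dmx_tr !dmx_det in Etr Edet.
have H0 : (val c - val a) * (val c - val b) = 0.
  have -> : (val c - val a) * (val c - val b) = val c * val c - val c * (val a + val b) + val a * val b by ring.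
  by rewrite -Etr -Edet; ring.
move/eqP: H0; rewrite mulf_eq0 !subr_eq0 => /orP[] /eqP E1.
  by left; split; apply: val_inj => //; move: Etr; rewrite E1 => /addrI.
right; split; apply: val_inj => //.
by move: Etr; rewrite E1 addrC => /addIr.
Qed.

Definition X (F : finFieldType) (l : {unit F}) n (z w : 'I_n) := dg (l ^+ z)%g (l ^+ w)%g.

Lemma valZpM n (z w : 'I_n.+2) : val (z * w) = (z * w %% n.+2)%N.
Proof. by []. Qed.

Lemma expl_eq (F : finFieldType) (l : {unit F}) n (z w : 'I_n.+2) :
  #[l]%g = n.+2 -> (l ^+ z)%g = (l ^+ w)%g -> z = w.
Proof.
move=> ol /eqP; rewrite eq_expg_mod_order ol !modn_small // => /eqP E.
exact: val_inj.
Qed.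

Lemma expl_mul (F : finFieldType) (l : {unit F}) n (z c : 'I_n.+2) :
  #[l]%g = n.+2 -> ((l ^+ z) ^+ c)%g = (l ^+ (z * c)%R)%g.
Proof. by move=> ol; rewrite -expgM valZpM; have := expg_mod_order l (z * c); rewrite ol => ->. Qed.

Lemma X_exp (F : finFieldType) (l : {unit F}) n (z w c : 'I_n.+2) :
  #[l]%g = n.+2 -> (X l z w ^+ c)%g = X l (z * c) (w * c).
Proof. by move=> ol; rewrite /X dg_exp !expl_mul. Qed.

Lemma X_eq1 (F : finFieldType) (l : {unit F}) n (z w : 'I_n.+2) :
  #[l]%g = n.+2 -> (X l z w == 1%g) = (z == 0) && (w == 0).
Proof.
move=> ol; rewrite /X dg_eq1.
have H (u : 'I_n.+2) : ((l ^+ u)%g == 1%g) = (u == 0).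
  apply/eqP/eqP => [|->]; last by rewrite expg0.
  move/eqP; rewrite -{1}(expg0 l) eq_expg_mod_order ol mod0n modn_small // => /eqP h.
  by apply: val_inj.
by rewrite !H.
Qed.

Lemma X_swap (F : finFieldType) (l : {unit F}) n (z w : 'I_n) :
  (X l z w ^ wGL F)%g = X l w z.
Proof. exact: dg_swap. Qed.

Lemma X_conj (F : finFieldType) (l : {unit F}) n (z w z' w' : 'I_n.+2) g :
  #[l]%g = n.+2 -> (X l z w ^ g)%g = X l z' w' ->
  (z = z' /\ w = w') \/ (z = w' /\ w = z').
Proof.
move=> ol /dg_conj [[/(expl_eq ol) -> /(expl_eq ol) ->]|[/(expl_eq ol) -> /(expl_eq ol) ->]].
  by left. by right.
Qed.

Lemma X_expn (F : finFieldType) (l : {unit F}) n (z w : 'I_n.+2) :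
  #[l]%g = n.+2 -> (X l z w ^+ n.+2)%g = 1%g.
Proof.
move=> ol; have E : (l ^+ n.+2 = 1)%g by rewrite -{1}ol expg_order.
rewrite /X dg_exp -!expgM !(mulnC _ n.+2) !expgM E !expg1n.
exact: dg1.
Qed.

Lemma X_order (F : finFieldType) (l : {unit F}) n (z w : 'I_n.+2) :
  #[l]%g = n.+2 -> prime n.+2 -> X l z w != 1%g -> #[X l z w]%g = n.+2.
Proof.
move=> ol pn ne1.
have : (#[X l z w]%g %| n.+2)%N by rewrite order_dvdn X_expn.
case/(primeP pn).2/orP=> /eqP // o1.
by move: ne1; rewrite -order_eq1 o1.
Qed.

Lemma cyc_eq (gT : finGroupType) (x y : gT) :
  y \in <[x]>%g -> y != 1%g -> prime #[x]%g -> <[y]>%g = <[x]>%g.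
Proof.
move=> yx ne1 px; apply/eqP; rewrite eqEcard cycle_subG yx /=.
have : (#[y]%g %| #[x]%g)%N by apply: order_dvdG.
case/(primeP px).2/orP=> /eqP o1.
  by move: ne1; rewrite -order_eq1 o1.
by rewrite -!orderE o1.
Qed.


Lemma CC (F : finFieldType) (l : {unit F}) n (z w z' w' : 'I_n.+2) :
  #[l]%g = n.+2 -> prime n.+2 -> (z' != 0) || (w' != 0) ->
  (exists g, <[X l z' w']>%g = (<[X l z w]> :^ g)%g) <->
  exists c, (z' = z * c /\ w' = w * c) \/ (z' = w * c /\ w' = z * c).
Proof.
move=> ol pn nz; have ne1 : X l z' w' != 1%g by rewrite X_eq1 // negb_and.
split.
  case=> g E; have : X l z' w' \in <[X l z' w']>%g by apply: cycle_id.
  rewrite E -cycleJ => /cycleP [m]; rewrite -conjXg -(expg_mod _ (X_expn z w ol)).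
  have -> : (m %% n.+2)%N = val (inZp m : 'I_n.+2) by [].
  rewrite X_exp // => /esym /(X_conj ol) [[<- <-]|[<- <-]].
    by exists (inZp m); left.
  by exists (inZp m); right.
have key (a b : 'I_n.+2) (c : nat) : (X l a b ^+ c)%g = X l z' w' -> <[X l z' w']>%g = <[X l a b]>%g.
  move=> E; apply: cyc_eq; first by rewrite -E mem_cycle.
    exact: ne1.
  rewrite X_order //; apply: contra ne1 => /eqP e.
  by rewrite -E e expg1n.
case=> c [[E1 E2]|[E1 E2]].
  exists 1%g; rewrite conjsg1; apply: (key _ _ c); by rewrite X_exp // E1 E2.
exists (wGL F); rewrite -cycleJ X_swap; apply: (key _ _ c); by rewrite X_exp // E1 E2.
Qed.

Lemma expl_Zp (F : finFieldType) (l : {unit F}) n (i : nat) :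
  #[l]%g = n.+2 -> (l ^+ i)%g = (l ^+ (inZp i : 'I_n.+2))%g.
Proof. move=> ol; rewrite /=; have := expg_mod_order l i; rewrite ol => ->. by []. Qed.

Lemma sylow_part (F : finFieldType) (l : {unit F}) n (H : {group {'GL_2[F]}}) :
  #[l]%g = n.+2 -> prime n.+2 -> (#|'GL_2[F]%g|`_(n.+2) = (n.+2) ^ 2)%N ->
  #|H| = n.+2 ->
  exists g, exists z w : 'I_n.+2, ((z != 0) || (w != 0)) /\ (H :=: <[X l z w]> :^ g)%g.
Proof.
move=> ol pn cardGL cardH.
pose L := <[l]>%g.
pose Dp := [set dg x.1 x.2 | x in setX L L].
have gs : group_set Dp.
  apply/group_setP; split.
    by apply/imsetP; exists (1, 1)%g; rewrite ?inE ?group1 //= dg1.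
  move=> x y /imsetP [[a b] + ->] /imsetP [[c d] + ->]; rewrite !inE /= => /andP [aL bL] /andP [cL dL].
  by rewrite dg_mul; apply/imsetP; exists ((a * c)%g, (b * d)%g); rewrite ?inE /= ?groupM.
pose DpG := Group gs.
have cardD : #|DpG| = ((n.+2) ^ 2)%N.
  rewrite /= card_in_imset; last by move=> [a b] [c d] _ _ /= /dg_inj [-> ->].
  by rewrite cardsX -orderE ol.
have syl : ((n.+2).-Sylow('GL_2[F]) DpG)%g by rewrite pHallE subsetT /= cardD cardGL.
have pH : ((n.+2).-group H)%g by rewrite /pgroup cardH pnat_id.
have sHG : H \subset 'GL_2[F]%g by apply: subsetT.
have [g _ sHD] := Sylow_subJ syl sHG pH.
have : (gval H != 1%g :> {set _}) by rewrite -cardG_gt1 cardH.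
case/trivgPn => h hH hne1.
have : h \in (DpG :^ g)%g by apply: (subsetP sHD).
rewrite mem_conjg => /imsetP [[u v]]; rewrite !inE /= => /andP [/cycleP [i ->] /cycleP [j ->]] Eh.
rewrite (expl_Zp _ ol) [(l ^+ j)%g](expl_Zp _ ol) in Eh.
set z := inZp i in Eh; set w := inZp j in Eh.
have Xne1 : X l z w != 1%g by rewrite /X -Eh conjg_eq1.
exists g, z, w; split; first by rewrite -negb_and -(X_eq1 z w ol).
have -> : (<[X l z w]> :^ g)%g = <[h]>%g by rewrite -cycleJ /X -Eh conjgKV.
apply/eqP; rewrite eq_sym eqEcard cycle_subG hH /= cardH -orderE.
by rewrite -(orderJ h g^-1) Eh -/(X l z w) X_order.
Qed.

Lemma v1 n : val (1 : 'I_n.+2) = 1%N. Proof. by []. Qed.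
Lemma vm1 n : val (-1 : 'I_n.+2) = n.+1. Proof. rewrite /= modn_small // subSS subn0 modn_small //. Qed.
Lemma v0 n : val (0 : 'I_n.+2) = 0%N. Proof. by []. Qed.

Lemma Zp_unit n (z : 'I_n.+2) : prime n.+2 -> z != 0 -> z \is a GRing.unit.
Proof.
move=> pn nz; have := @unitZpE n.+2 z isT; rewrite natr_Zp => ->.
rewrite prime_coprime // gtnNdvd //.
by rewrite lt0n; apply: contra nz => /eqP h; apply/eqP/val_inj.
Qed.

Lemma Zp_modE n (k s : 'I_n.+2) : ((k * s) %% n.+2 == 1)%N = (k * s == 1).
Proof. by rewrite -(v1 n) -val_eqE. Qed.

Lemma mulIeq n (c x y : 'I_n.+2) : c \is a GRing.unit -> (x * c == y * c) = (x == y).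
Proof. by move=> cu; apply: (inj_eq (mulIr cu)). Qed.

Definition inU n (k : 'I_n.+2) : bool := [&& k != 0, k != 1 & k != -1].

Lemma inUE n (k : 'I_n.+2) : (k \in units_minus_pm1 n.+2) = inU k.
Proof.
rewrite inE /inU -!val_eqE (v0 n) (v1 n) (vm1 n) /=.
have := ltn_ord k; lia.
Qed.

Definition invr3 n (z w r : 'I_n.+2) : bool := (r * z == w) || (r * w == z).

Definition Rel n (a b z w : 'I_n.+2) : Prop :=
  exists c, (z = a * c /\ w = b * c) \/ (z = b * c /\ w = a * c).

Lemma Rel_inv n (a b z w : 'I_n.+2) : prime n.+2 -> (z != 0) || (w != 0) ->
  Rel a b z w -> forall r, invr3 z w r = invr3 a b r.
Proof.
move=> pn nz [c Hc] r.
have cu : c \is a GRing.unit.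
  apply: Zp_unit => //; apply: contraTneq nz => c0.
  by case: Hc => [[-> ->]|[-> ->]]; rewrite c0 !mulr0 eqxx.
case: Hc => [[-> ->]|[-> ->]]; rewrite /invr3 !mulrA !mulIeq //.
by rewrite orbC.
Qed.

Lemma inUP n (k : 'I_n.+2) : inU k ->
  [/\ (k == 0) = false, (0 == k) = false & (k == 1) = false] /\ [/\ (1 == k) = false,
      (k == -1) = false & (-1 == k) = false].
Proof. by case/and3P => /negbTE a /negbTE b /negbTE c; rewrite !(eq_sym _ k) a b c. Qed.

Lemma consts n : (0 < n)%N ->
  [/\ (1 == 0 :> 'I_n.+2) = false, (0 == 1 :> 'I_n.+2) = false &
      (1 == -1 :> 'I_n.+2) = false] /\ [/\ (-1 == 1 :> 'I_n.+2) = false,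
      (0 == -1 :> 'I_n.+2) = false & (-1 == 0 :> 'I_n.+2) = false].
Proof.
move=> n0; rewrite -!val_eqE (v0 n) (v1 n) (vm1 n) /=.
by case: n n0.
Qed.

Definition Lpar n (S : {set 'I_n.+2}) : seq ('I_n.+2 * 'I_n.+2) :=
  [:: (0,1); (1,1); (1,-1)] ++ [seq (1,k) | k <- enum S].

Lemma LparP n (S : {set 'I_n.+2}) pr : pr \in Lpar S ->
  pr = (0,1) \/ pr = (1,1) \/ pr = (1,-1) \/ exists2 k, k \in S & pr = (1,k).
Proof.
rewrite mem_cat !inE => /orP [/or3P [] /eqP ->|/mapP [k]]; try by intuition.
by rewrite mem_enum => kS ->; right; right; right; exists k.
Qed.

Lemma reps_U n (S : {set 'I_n.+2}) k : inv_reps S -> k \in S -> inU k.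
Proof. by case=> sub _ kS; rewrite -inUE; apply: (subsetP sub). Qed.

Lemma reps_inv n (S : {set 'I_n.+2}) k s : inv_reps S -> k \in S -> s \in S ->
  k * s == 1 -> k = s.
Proof.
move=> [sub cnt] kS sS ks1.
have := cnt s (subsetP sub _ sS); move/eqP/cards1P => [x Ex].
have : s \in [set s' in S | inv_rel s' s] by rewrite inE sS /inv_rel eqxx.
have : k \in [set s' in S | inv_rel s' s] by rewrite inE kS /inv_rel Zp_modE ks1 orbT.
by rewrite Ex !inE => /eqP -> /eqP ->.
Qed.

Definition rep n (pr : 'I_n.+2 * 'I_n.+2) : 'I_n.+2 := if pr.1 == 0 then 0 else pr.2.

Lemma rep_in n (S : {set 'I_n.+2}) pr : pr \in Lpar S -> invr3 pr.1 pr.2 (rep pr).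
Proof.
by case/LparP => [->|[->|[->|[k _ ->]]]]; rewrite /invr3 /rep /= ?eqxx ?mul0r ?mulr1 ?eqxx ?orbT //;
  case: ifP => _; rewrite ?mul0r ?mulr1 ?eqxx ?orbT.
Qed.

Lemma rigid n (S : {set 'I_n.+2}) pr1 pr2 : (0 < n)%N -> inv_reps S ->
  pr1 \in Lpar S -> pr2 \in Lpar S -> invr3 pr2.1 pr2.2 (rep pr1) -> pr1 = pr2.
Proof.
move=> n0 reps; have [[c1 c2 c3] [c4 c5 c6]] := consts n0.
case/LparP => [->|[->|[->|[k kS ->]]]]; case/LparP => [->|[->|[->|[s sS ->]]]] //;
  rewrite /invr3 /rep /= ?eqxx ?c1 ?c2 ?mul0r ?mulr0 ?mul1r ?mulr1 ?mulN1r ?mulrN1 ?eqr_oppLR ?opprK ?oppr0 ?c1 ?c2 ?c3 ?c4 ?c5 ?c6 //;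
  try (have [[k1 k2 k3] [k4 k5 k6]] := inUP (reps_U reps kS);
       have k7 : (1 == - k) = false by rewrite -eqr_oppLR k6);
  try (have [[s1 s2 s3] [s4 s5 s6]] := inUP (reps_U reps sS);
       have s7 : (1 == - s) = false by rewrite -eqr_oppLR s6);
  rewrite ?k1 ?k2 ?k3 ?k4 ?k5 ?k6 ?k7 ?s1 ?s2 ?s3 ?s4 ?s5 ?s6 ?s7 //.
case/orP => [/eqP -> //|/(reps_inv reps kS sS) -> //].
Qed.

Lemma exist_rep n (S : {set 'I_n.+2}) (z w : 'I_n.+2) :
  prime n.+2 -> inv_reps S -> (z != 0) || (w != 0) ->
  exists2 pr, pr \in Lpar S & Rel pr.1 pr.2 z w.
Proof.
move=> pn reps nz.
have L01 : ((0, 1) : 'I_n.+2 * 'I_n.+2) \in Lpar S by rewrite mem_cat !inE eqxx.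
have L11 : ((1, 1) : 'I_n.+2 * 'I_n.+2) \in Lpar S by rewrite mem_cat !inE eqxx ?orbT.
have L1m1 : ((1, -1) : 'I_n.+2 * 'I_n.+2) \in Lpar S by rewrite mem_cat !inE eqxx ?orbT.
have L1k k : k \in S -> ((1, k) : 'I_n.+2 * 'I_n.+2) \in Lpar S.
  by move=> kS; rewrite mem_cat; apply/orP; right; apply: map_f; rewrite mem_enum.
case: (eqVneq z 0) => [z0|zn0].
  by exists (0, 1) => //; exists w; left; rewrite z0 mul0r mul1r.
case: (eqVneq w 0) => [w0|wn0].
  by exists (0, 1) => //; exists z; right; rewrite w0 mul0r mul1r.
have zu := Zp_unit pn zn0.
pose k := w / z.
have hw : w = k * z by rewrite /k divrK.
case: (eqVneq k 1) => [k1|kn1].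
  by exists (1, 1) => //; exists z; left; rewrite mul1r hw k1 mul1r.
case: (eqVneq k (-1)) => [km1|knm1].
  by exists (1, -1) => //; exists z; left; rewrite mul1r hw km1.
have kn0 : k != 0 by apply: contra wn0 => /eqP k0; rewrite hw k0 mul0r.
have kU : k \in units_minus_pm1 n.+2 by rewrite inUE /inU kn0 kn1 knm1.
case: reps => sub cnt; have := cnt k kU; move/eqP/cards1P => [x Ex].
have : x \in [set s in S | inv_rel s k] by rewrite Ex inE.
rewrite inE /inv_rel Zp_modE => /andP [xS /orP [/eqP xk|xk1]].
  by exists (1, x); [apply: L1k | exists z; left; rewrite mul1r xk].
exists (1, x); first exact: L1k.
exists w; right; rewrite mul1r; split => //.
by rewrite hw mulrA (eqP xk1) mul1r.
Qed.

Lemma Lpar_uniq n (S : {set 'I_n.+2}) : (0 < n)%N -> inv_reps S -> uniq (Lpar S).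
Proof.
move=> n0 reps; have [[c1 c2 c3] [c4 c5 c6]] := consts n0.
rewrite cat_uniq; apply/and3P; split.
- by rewrite /= !inE !xpair_eqE ?c1 ?c2 ?c3 ?c4 ?eqxx.
- apply/hasPn => pr /mapP [k]; rewrite mem_enum => kS ->.
  have [[k1 k2 k3] [k4 k5 k6]] := inUP (reps_U reps kS).
  by rewrite /= !inE !xpair_eqE ?c1 ?k3 ?k5 ?eqxx.
- rewrite map_inj_uniq ?enum_uniq //.
  by move=> a b [].
Qed.

Lemma sq_neq1 n (k : 'I_n.+2) : prime n.+2 -> inU k -> k * k != 1.
Proof.
move=> pn /and3P [k0 k1 km1]; apply/negP => /eqP kk.
have h : (k - 1) * (k + 1) = 0 by rewrite mulrDr mulrBl kk mul1r mulr1; ring.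
have u : k - 1 \is a GRing.unit by apply: Zp_unit => //; rewrite subr_eq0.
have h2 : k + 1 = 0 by rewrite -(mulKr u (k + 1)) h mulr0.
by move: km1; rewrite -addr_eq0 h2 eqxx.
Qed.

Lemma inU_inv n (k : 'I_n.+2) : prime n.+2 -> inU k -> inU k^-1.
Proof.
move=> pn /and3P [k0 k1 km1]; apply/and3P; split.
- by rewrite invr_eq0.
- by rewrite invr_eq1.
- by apply: contra km1 => /eqP h; rewrite -(invrK k) h invrN1.
Qed.

Lemma card_U n : (0 < n)%N -> #|units_minus_pm1 n.+2| = n.-1.
Proof.
move=> n0; have [[c1 c2 c3] [c4 c5 c6]] := consts n0.
have E : ~: units_minus_pm1 n.+2 = 0 |: [set 1; -1].
  apply/setP => k; rewrite !inE -!val_eqE (v0 n) (v1 n) (vm1 n) /=.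
  have := ltn_ord k; lia.
have := cardsC (units_minus_pm1 n.+2); rewrite E cardsU1 cards2 !inE c2 c5 c3 card_ord /=.
lia.
Qed.

Lemma card_reps n (S : {set 'I_n.+2}) : prime n.+2 -> (0 < n)%N -> inv_reps S ->
  (#|S|.*2 = n.-1)%N.
Proof.
move=> pn n0 reps; rewrite -(card_U n0).
pose Si := [set k^-1 | k in S].
have cSi : #|Si| = #|S| by rewrite card_imset //; apply: invr_inj.
have EU : units_minus_pm1 n.+2 = S :|: Si.
  apply/setP => k; apply/idP/idP.
    move=> kU; rewrite inE; have [sub cnt] := reps; have := cnt k kU; move/eqP/cards1P => [x Ex].
    have : x \in [set s in S | inv_rel s k] by rewrite Ex inE.
    rewrite inE /inv_rel Zp_modE => /andP [xS /orP [/eqP <-|xk1]]; first by rewrite xS.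
    apply/orP; right; apply/imsetP; exists x => //.
    have xu : x \is a GRing.unit by apply: Zp_unit => //; case/and3P: (reps_U reps xS).
    by rewrite -(mulKr xu k) (eqP xk1) mulr1.
  rewrite inE; case/orP => [kS|/imsetP [s sS ->]]; first by rewrite inUE (reps_U reps kS).
  by rewrite inUE inU_inv // (reps_U reps sS).
have D : S :&: Si = set0.
  apply/setP => k; rewrite !inE; apply/negP => /andP [kS /imsetP [s sS Ek]].
  have su : s \is a GRing.unit by apply: Zp_unit => //; case/and3P: (reps_U reps sS).
  have ks : k = s by apply: (reps_inv reps kS sS); rewrite Ek mulVr.
  have := sq_neq1 pn (reps_U reps sS); rewrite -{1}ks Ek mulVr // eqxx.
by rewrite EU cardsU D cards0 cSi subn0 addnn.
Qed.

Definition zinv n (k : 'I_n.+2) : 'I_n.+2 := k^-1.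
Lemma zinvK n (k : 'I_n.+2) : zinv (zinv k) = k. Proof. exact: invrK. Qed.

Lemma exists_reps n : prime n.+2 -> (0 < n)%N -> exists S : {set 'I_n.+2}, inv_reps S.
Proof.
move=> pn n0.
exists [set k : 'I_n.+2 | inU k && (val k < val (zinv k))%N]; split.
  apply/subsetP => k; rewrite inE => /andP [kU _]; by rewrite inUE.
move=> k; rewrite inUE => kU.
have ku : k \is a GRing.unit by apply: Zp_unit => //; case/and3P: kU.
have kk : k != zinv k.
  apply/negP => /eqP h; move: (sq_neq1 pn kU); by rewrite {2}h /zinv mulrV // eqxx.
have E s : inv_rel s k = (s == k) || (s == zinv k).
  rewrite /inv_rel Zp_modE; congr (_ || _); apply/eqP/eqP => [h|->]; last by rewrite /zinv mulVr.
  by rewrite /zinv -(mulrK ku s) h mul1r.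
have kiU : inU (zinv k) := inU_inv pn kU.
case: (ltngtP (val k) (val (zinv k))) => [lt|gt|eq]; last by move: kk; rewrite -val_eqE eq eqxx.
  have -> : [set s in [set k0 : 'I_n.+2 | inU k0 && (val k0 < val (zinv k0))%N] | inv_rel s k] = [set k].
    apply/setP => s; rewrite !inE E; case: (eqVneq s k) => [->|sk]; first by rewrite kU lt.
    case: (eqVneq s (zinv k)) => [->|_]; last by rewrite andbF.
    rewrite zinvK kiU /=.
    by rewrite andbT; apply/negP => h; move: (ltn_trans h lt); rewrite ltnn.
  by rewrite cards1.
have -> : [set s in [set k0 : 'I_n.+2 | inU k0 && (val k0 < val (zinv k0))%N] | inv_rel s k] = [set zinv k].
  apply/setP => s; rewrite !inE E; case: (eqVneq s (zinv k)) => [->|sk]; first by rewrite kiU zinvK gt orbT.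
  case: (eqVneq s k) => [->|_]; last by rewrite andbF.
  rewrite kU /=.
  by rewrite ?andbT; apply/negP => h; move: (ltn_trans h gt); rewrite ltnn.
by rewrite cards1.
Qed.

Local Close Scope ring_scope.
Local Open Scope group_scope.


Lemma clP (gT : finGroupType) (A B : {set gT}) :
  reflect (exists g, A = B :^ g) (A \in B :^: [set: gT]).
Proof.
apply: (iffP imsetP) => [[g _ ->]|[g ->]]; first by exists g.
by exists g; rewrite ?inE.
Qed.

Lemma cl_refl (gT : finGroupType) (A : {set gT}) : A \in A :^: [set: gT].
Proof. by apply/clP; exists 1; rewrite conjsg1. Qed.

Lemma cl_eq (gT : finGroupType) (A B : {set gT}) :
  A \in B :^: [set: gT] -> A :^: [set: gT] = B :^: [set: gT].
Proof.
case/clP => x ->; apply/setP => C; apply/clP/clP => [[y ->]|[y ->]].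
  by exists (x * y); rewrite conjsgM.
by exists (x^-1 * y); rewrite conjsgM conjsgK.
Qed.

Lemma count_classes (gT : finGroupType) n (L : seq {set gT}) :
  conj_class_reps n L -> #|subgroup_classes_of_order gT n| = size L.
Proof.
case=> inL cnt.
have cnt1 K : K \in L -> (count_mem K L <= 1)%N.
  move=> KL; rewrite -(cnt K (inL K KL)); apply: sub_count => K' /= /eqP ->.
  exact: cl_refl.
have uL : uniq L.
  apply: count_mem_uniq => K; case: (boolP (K \in L)) => KL; last by apply/count_memPn.
  apply/eqP; rewrite eqn_leq cnt1 //= -has_count; apply/hasP; exists K => //=.
have E : subgroup_classes_of_order gT n = [set K :^: [set: gT] | K in L].
  apply/setP => C; apply/imsetP/imsetP => [[H Hs ->]|[K0 KL ->]]; last first.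
    by exists K0 => //; apply: inL.
  have : (0 < count (fun K => H \in K :^: [set: gT]) L)%N by rewrite cnt.
  rewrite -has_count => /hasP [K KL HK]; exists K => //.
  exact: cl_eq.
rewrite E card_in_imset; first by apply/card_uniqP.
move=> K1 K2 K1L K2L E12; apply/eqP/negPn/negP => ne.
have le : (count (predU (pred1 K1) (pred1 K2)) L <= count (fun K => K2 \in K :^: [set: gT]) L)%N.
  apply: sub_count => K /= /orP [] /eqP ->; last exact: cl_refl.
  by rewrite E12; apply: cl_refl.
have c0 : count (predI (pred1 K1) (pred1 K2)) L = 0%N.
  rewrite (@eq_count _ _ pred0) ?count_pred0 // => K /=.
  by apply/andP => [[/eqP -> /eqP e]]; move: ne; rewrite e eqxx.
have := count_predUI (pred1 K1) (pred1 K2) L.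
rewrite c0 addn0 !count_uniq_mem // K1L K2L => c2.
by move: le; rewrite c2 (cnt K2 (inL K2 K2L)).
Qed.

Local Close Scope group_scope.

Lemma GLpart (n q : nat) : prime n.+2 -> prime q -> (n.+2 < q)%N -> (n.+2 %| q.-1)%N ->
  ~~ (n.+2 ^ 2 %| q.-1)%N -> ~~ (n.+2 %| q.+1)%N ->
  (#|'GL_2['F_q]%g|`_(n.+2) = n.+2 ^ 2)%N.
Proof.
move=> pn pq nq d1 d2 d3.
have q0 : (0 < q)%N by apply: prime_gt0.
have q1 : (0 < q.-1)%N by lia.
rewrite card_GL_2 card_Fp // p_part.
rewrite !lognM ?muln_gt0 ?expn_gt0 ?q0 ?q1 //.
rewrite logn_prime // (@logn_coprime n.+2 q.+1); last by rewrite prime_coprime.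
have -> : logn n.+2 q.-1 = 1%N.
  have h1 := d1; rewrite -(expn1 n.+2) pfactor_dvdn // in h1.
  move: d2; rewrite pfactor_dvdn //; lia.
have -> : (n.+2 == q) = false by apply/negbTE; rewrite neq_ltn nq.
by [].
Qed.

Theorem mainTheorem3 (p q : nat) (lambda : {unit 'F_q})
  (pp : prime p) (pq : prime q) (p_gt2 : (2 < p)%N) (q_gtp : (p < q)%N)
  (q_ge5 : (5 <= q)%N) (p_dvd : (p %| q.-1)%N) (p_ndvd : ~~ (p %| q.+1)%N)
  (p2_ndvd : ~~ (p ^ 2 %| q.-1)%N)
  (lambda_ord : #[lambda]%g = p) :
  (forall S : {set 'I_p}, inv_reps S ->
     conj_class_reps p
       ([:: <[diagGL 1%g lambda]>%g : {set {'GL_2(q)}};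
            <[diagGL lambda lambda]>%g;
            <[diagGL lambda (lambda^-1)%g]>%g]
        ++ [seq <[diagGL lambda (lambda ^+ (nat_of_ord k))%g]>%g | k : 'I_p <- enum S]))
  /\ #|subgroup_classes_of_order {'GL_2(q)} p| = ((p + 3) %/ 2)%N.
Proof.
have [n En] : exists n, p = n.+2 by exists p.-2; lia.
move: lambda_ord pp p_gt2 q_gtp p_dvd p_ndvd p2_ndvd; subst p.
move=> lambda_ord pp p_gt2 q_gtp p_dvd p_ndvd p2_ndvd.
have n0 : (0 < n)%N by lia.
have cardGL := GLpart pp pq q_gtp p_dvd p2_ndvd p_ndvd.
have main : forall S : {set 'I_n.+2}, inv_reps S ->
    conj_class_reps n.+2 [seq <[X lambda pr.1 pr.2]>%g | pr <- Lpar S].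
  move=> S reps; split.
    move=> K /mapP [pr prL ->]; rewrite inE; apply/andP; split.
      exact: groupP (cycle_group _).
    have ne1 : X lambda pr.1 pr.2 != 1%g.
      rewrite X_eq1 //; case/LparP: prL => [->|[->|[->|[k _ ->]]]] /=;
        by rewrite ?eqxx ?oner_eq0 ?andbF.
    by rewrite -orderE X_order.
  move=> H; rewrite inE => /andP [gsH /eqP cH].
  pose HG := Group gsH.
  have [g [z [w [nz EH]]]] := sylow_part (H := HG) lambda_ord pp cardGL cH.
  have EH' : H = (<[X lambda z w]> :^ g)%g by [].
  have [pr0 pr0L R0] := exist_rep pp reps nz.
  rewrite count_map (@eq_in_count _ _ (pred1 pr0)); last first.
    move=> pr prL /=; apply/idP/eqP.
      case/clP => g' Eg'.
      have Rpr : Rel pr.1 pr.2 z w.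
        apply/(CC _ _ lambda_ord pp nz); exists (g' * g^-1)%g.
        by rewrite conjsgM -Eg' EH' conjsgK.
      apply: (rigid n0 reps prL pr0L).
      rewrite -(Rel_inv pp nz R0) (Rel_inv pp nz Rpr).
      exact: rep_in prL.
    move=> ->; apply/clP.
    have [g' Eg'] := (CC _ _ lambda_ord pp nz).2 R0.
    by exists (g' * g)%g; rewrite EH' Eg' conjsgM.
  by rewrite count_uniq_mem ?Lpar_uniq // pr0L.
have EL (S : {set 'I_n.+2}) : [:: <[diagGL 1%g lambda]>%g : {set {'GL_2(q)}};
            <[diagGL lambda lambda]>%g;
            <[diagGL lambda (lambda^-1)%g]>%g]
        ++ [seq <[diagGL lambda (lambda ^+ (nat_of_ord k))%g]>%g | k : 'I_n.+2 <- enum S]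
     = [seq <[X lambda pr.1 pr.2]>%g | pr <- Lpar S].
  have e1 : diagGL 1%g lambda = X lambda (0%R : 'I_n.+2) 1%R.
    rewrite (dg_diagGL 1%g lambda) /X.
    rewrite expg1.
    have -> : (lambda ^+ (0%R : 'I_n.+2))%g = 1%g by rewrite (v0 n) expg0.
    by [].
  have e2 : diagGL lambda lambda = X lambda (1%R : 'I_n.+2) 1%R.
    rewrite (dg_diagGL lambda lambda).
    rewrite /X.
    rewrite !(v1 n) expg1.
    reflexivity.
  have e3 : diagGL lambda lambda^-1 = X lambda (1%R : 'I_n.+2) (-1)%R.
    rewrite (dg_diagGL lambda lambda^-1) /X (vm1 n) !(v1 n) expg1 invg_expg lambda_ord.
    reflexivity.
  have e4 (k : 'I_n.+2) : diagGL lambda (lambda ^+ k) = X lambda (1%R : 'I_n.+2) k.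
    rewrite (dg_diagGL lambda) /X !(v1 n) expg1.
    reflexivity.
  rewrite e1 e2 e3 (eq_map (fun k => congr1 _ (e4 k))).
  rewrite /Lpar map_cat -map_comp.
  reflexivity.
split; first by move=> S reps; rewrite EL; apply: main.
have [S0 r0] := exists_reps pp n0.
rewrite (count_classes (main S0 r0)) size_map size_cat size_map /= -cardE.
have := card_reps pp n0 r0; rewrite -muln2 -subn1 => h.
have -> : (n.+2 + 3 = (#|S0| + 3) * 2)%N by lia.
by rewrite mulnK // addnC.
Qed.
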